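(* Let $H$ be a monoid, with identity $1_H$ and group of units $H^\times$. The following are equivalent: (a) $\mathcal{P}_{\mathrm{fin},1}(H)$ is UmF; (b) $H\setminus H^\times$ is an almost-breakable subsemigroup of $H$, the group of units $H^\times$ has order $\le 2$, $H$ is the trivial ideal extension of $H\setminus H^\times$ by $H^\times$, and $\mathcal{P}_{\mathrm{fin},1}\big((H\setminus H^\times)\cup\{1_H\}\big)$ is UmF.
   Context: For a monoid $H$, $\mathcal{P}_{\mathrm{fin},1}(H)$ denotes the set of all non-empty finite subsets of $H$ containing $1_H$; it is a monoid under setwise multiplication $XY=\{xy: x\in X, y\in Y\}$, with identity $\{1_H\}$ (the reduced finitary power monoid of $H$). Divisibility in a monoid $M$: $x\mid_M y$ iff $y\in MxM=\{uxv: u,v\in M\}$; $x,y$ are associated if each divides the other; $x$ properly divides $y$ if $x\mid_M y$ but $y\nmid_M x$. A unit-divisor is an element dividing $1_M$; otherwise it is a non-unit-divisor. An irreducible of $M$ is a non-unit-divisor $a$ such that $a\neq xy$ for all non-unit-divisors $x,y$ that both properly divide $a$. Factorizations: a factorization of $x\in M$ is a finite word $a_1\ast\cdots\ast a_n$ (possibly empty) in the free monoid over the set of irreducibles of $M$ with $a_1\cdots a_n=x$. For words $\mathfrak a,\mathfrak b$ over $M$, write $\mathfrak a\sqsubseteq\mathfrak b$ if $\mathfrak a$ is, up to replacing letters by associated elements, a subword (subsequence) of some permutation of $\mathfrak b$; $\mathfrak a,\mathfrak b$ are equivalent if $\mathfrak a\sqsubseteq\mathfrak b\sqsubseteq\mathfrak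 a$. A factorization $\mathfrak a$ of $x$ is minimal if there is no factorization $\mathfrak b$ of $x$ with $\mathfrak b\sqsubseteq\mathfrak a$ and $\mathfrak a\not\sqsubseteq\mathfrak b$. $M$ is factorable if every non-unit-divisor is a product of irreducibles, and $M$ is UmF if it is factorable and any two minimal factorizations of the same element are equivalent. A semigroup $S$ is almost-breakable if for all $x,y\in S$, $xy\in\{x,y\}$ or $yx\in\{x,y\}$. For disjoint semigroups $G$ and $K$, the trivial ideal extension of $K$ by $G$ is the semigroup on $G\cup K$ extending the operations of $G$ and $K$ by $xy=yx=y$ for all $x\in G$, $y\in K$; ''$H$ is the trivial ideal extension of $H\setminus H^\times$ by $H^\times$'' means the multiplication of $H$ coincides with this operation, i.e. $uy=yu=y$ for all $u\in H^\times$, $y\in H\setminus H^\times$. *)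

(* Defs.v *)
(* Sub-monoids are described by a domain predicate [D] on the
   carrier; all notions of a monoid M below quantify only over elements
   satisfying [D]. *)
From Stdlib Require Import List Permutation.
Import ListNotations.
Set Implicit Arguments.

Section MonoidNotions.
Variables (T : Type) (D : T -> Prop) (mul : T -> T -> T) (one : T).

Definition mdivides (x y : T) : Prop :=
  exists u v, D u /\ D v /\ y = mul (mul u x) v.

Definition massociated (x y : T) : Prop := mdivides x y /\ mdivides y x.

Definition mproperly_divides (x y : T) : Prop := mdivides x y /\ ~ mdivides y x.

Definition unit_divisor (x : T) : Prop := mdivides x one.

Definition irreducible (a : T) : Prop :=
  D a /\ ~ unit_divisor a /\
  ~ (exists x y, D x /\ D y /\ ~ unit_divisor x /\ ~ unit_divisor y /\
        mproperly_divides x a /\ mproperly_divides y a /\ a = mul x y).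

Definition wprod (w : list T) : T := fold_right mul one w.

Definition factorization (w : list T) (x : T) : Prop :=
  Forall irreducible w /\ wprod w = x.

Inductive subword : list T -> list T -> Prop :=
| subword_nil : subword [] []
| subword_skip : forall x l1 l2, subword l1 l2 -> subword l1 (x :: l2)
| subword_keep : forall x l1 l2, subword l1 l2 -> subword (x :: l1) (x :: l2).

Definition wle (a b : list T) : Prop :=
  exists a' p, Forall2 massociated a a' /\ Permutation b p /\ subword a' p.

Definition wequiv (a b : list T) : Prop := wle a b /\ wle b a.

Definition minimal_factorization (a : list T) (x : T) : Prop :=
  factorization a x /\
  ~ (exists b, factorization b x /\ wle b a /\ ~ wle a b).

Definition factorable : Prop :=
  forall x, D x -> ~ unit_divisor x -> exists a, factorization a x.

Definition UmF : Prop :=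
  factorable /\
  forall x a b, D x -> minimal_factorization a x -> minimal_factorization b x ->
    wequiv a b.

End MonoidNotions.

Section PowerMonoid.
Variables (H : Type) (mul : H -> H -> H) (one : H).

Definition is_monoid : Prop :=
  (forall x y z, mul x (mul y z) = mul (mul x y) z) /\
  (forall x, mul one x = x) /\ (forall x, mul x one = x).

Definition is_unit (u : H) : Prop := exists v, mul u v = one /\ mul v u = one.

Definition set_mul (X Y : H -> Prop) : H -> Prop :=
  fun z => exists x y, X x /\ Y y /\ z = mul x y.

Definition set_one : H -> Prop := fun z => z = one.

Definition finite_set (X : H -> Prop) : Prop :=
  exists l : list H, forall x, X x -> In x l.

Definition Pfin1_dom (S : H -> Prop) (X : H -> Prop) : Prop :=
  finite_set X /\ X one /\ (forall x, X x -> S x).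

Definition Pfin1_UmF (S : H -> Prop) : Prop :=
  UmF (Pfin1_dom S) set_mul set_one.

Definition subsemigroup (S : H -> Prop) : Prop :=
  forall x y, S x -> S y -> S (mul x y).

Definition almost_breakable (S : H -> Prop) : Prop :=
  forall x y, S x -> S y ->
    (mul x y = x \/ mul x y = y) \/ (mul y x = x \/ mul y x = y).

Definition units_order_le2 : Prop :=
  exists u0 u1, forall u, is_unit u -> u = u0 \/ u = u1.

Definition trivial_ideal_extension : Prop :=
  forall u y, is_unit u -> ~ is_unit y -> mul u y = y /\ mul y u = y.

End PowerMonoid.

(* Main.v *)
Require Import Defs.
From Stdlib Require Import Arith List Permutation Classical ClassicalEpsilon FunctionalExtensionality PropExtensionality Lia.
Import ListNotations.

Module P1.
Set Implicit Arguments.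

Section Lists.
Variable T : Type.

Definition deq (x y : T) : {x = y} + {x <> y} := excluded_middle_informative (x = y).
Definition cnt (x : T) (l : list T) := count_occ deq l x.

Definition sub (c a : list T) := exists p, Permutation a p /\ subword c p.

Lemma subword_length (c p : list T) : subword c p -> length c <= length p.
Proof. induction 1; simpl; lia. Qed.

Lemma subword_incl (c p : list T) : subword c p -> incl c p.
Proof.
  induction 1; intros z Hz; simpl in *; auto.
  destruct Hz; auto.
Qed.

Lemma subword_eq (c p : list T) : subword c p -> length c = length p -> c = p.
Proof.
  induction 1; simpl; intros E; auto.
  - apply subword_length in H. lia.
  - f_equal; auto.
Qed.

Lemma subword_refl (l : list T) : subword l l.
Proof. induction l; [apply subword_nil|apply subword_keep; auto]. Qed.

Lemma subword_nil_l (l : list T) : subword [] l.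
Proof. induction l; [apply subword_nil|apply subword_skip; auto]. Qed.

Lemma subword_cnt (c p : list T) : subword c p -> forall x, cnt x c <= cnt x p.
Proof.
  unfold cnt; induction 1; intros z; simpl; auto.
  - destruct (deq x z); specialize (IHsubword z); lia.
  - destruct (deq x z); specialize (IHsubword z); lia.
Qed.

Lemma cnt_perm (a b : list T) : Permutation a b -> forall x, cnt x a = cnt x b.
Proof. intros; unfold cnt; apply Permutation_count_occ; auto. Qed.

Lemma sub_cnt (c a : list T) : sub c a <-> forall x, cnt x c <= cnt x a.
Proof.
  split.
  - intros [p [Hp Hs]] x. rewrite (cnt_perm Hp x). apply subword_cnt; auto.
  - revert a; induction c as [|y c IH]; intros a Hc.
    + exists a; split; auto. apply subword_nil_l.
    + assert (Hy: In y a).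
      { apply (count_occ_In deq). specialize (Hc y). unfold cnt in Hc; simpl in Hc.
        destruct (deq y y); [lia|congruence]. }
      apply in_split in Hy. destruct Hy as [l1 [l2 E]]. subst a.
      destruct (IH (l1 ++ l2)) as [p [Hp Hs]].
      { intros x. specialize (Hc x). unfold cnt in *. simpl in Hc.
        rewrite count_occ_app in *. simpl in Hc. destruct (deq y x); lia. }
      exists (y :: p). split.
      * eapply Permutation_trans. apply Permutation_sym, Permutation_middle. constructor; auto.
      * apply subword_keep; auto.
Qed.

Lemma proper_sub (c a : list T) : sub c a -> ~ sub a c -> length c < length a /\ incl c a.
Proof.
  intros [p [Hp Hs]] Hn. split.
  - pose proof (subword_length Hs). rewrite <- (Permutation_length Hp) in H.
    destruct (Nat.eq_dec (length c) (length a)); [|lia].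
    exfalso; apply Hn. assert (Ec: c = p).
    { apply subword_eq; auto. rewrite <- (Permutation_length Hp); auto. }
    subst c. exists a. split; [apply Permutation_sym; auto|apply subword_refl].
  - intros z Hz. apply (Permutation_in _ (Permutation_sym Hp)). apply (subword_incl Hs); auto.
Qed.

Lemma sub_len (c a : list T) : sub c a -> length c <= length a.
Proof. intros [p [Hp Hs]]. rewrite (Permutation_length Hp). apply subword_length; auto. Qed.

Lemma sub2 (x1 x2 y1 y2 : T) : sub [x1;x2] [y1;y2] -> (x1 = y1 /\ x2 = y2) \/ (x1 = y2 /\ x2 = y1).
Proof.
  intros [p [Hp Hs]].
  assert (E: [x1;x2] = p). { apply subword_eq; auto. rewrite <- (Permutation_length Hp); auto. }
  subst p. apply Permutation_length_2 in Hp. intuition.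
Qed.

Lemma cnt_filter (E x : T) (a : list T) :
  cnt x (filter (fun A => if deq A E then false else true) a) = if deq x E then 0 else cnt x a.
Proof.
  unfold cnt. induction a as [|y a IH]; simpl.
  - destruct (deq x E); auto.
  - destruct (deq y E); simpl.
    + rewrite IH. destruct (deq x E); destruct (deq y x); subst; try congruence; auto.
    + destruct (deq y x); rewrite IH; destruct (deq x E); subst; try congruence; auto.
Qed.

Lemma cnt_In (x : T) l : In x l <-> cnt x l > 0.
Proof. unfold cnt. apply count_occ_In. Qed.

End Lists.

End P1.
Import P1.

Module P2.
Set Implicit Arguments.

Lemma seteq {H : Type} (X Y : H -> Prop) : (forall z, X z <-> Y z) -> X = Y.
Proof. intros E; apply functional_extensionality; intros z; apply propositional_extensionality; auto. Qed.

Section PS.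
Variables (H : Type) (mul : H -> H -> H) (one : H).
Hypothesis assoc : forall x y z, mul x (mul y z) = mul (mul x y) z.
Hypothesis one_l : forall x, mul one x = x.
Hypothesis one_r : forall x, mul x one = x.

Notation Pm := (set_mul mul).
Notation Po := (set_one one).
Notation wp := (wprod Pm Po).

Lemma Pm_assoc X Y Z : Pm X (Pm Y Z) = Pm (Pm X Y) Z.
Proof.
  apply seteq; intros z; unfold set_mul; split.
  - intros [x [w [Hx [[y [t [Hy [Ht E]]]] E2]]]]. subst.
    exists (mul x y), t. split; [exists x, y; auto|split; auto].
  - intros [w [t [[x [y [Hx [Hy E]]]] [Ht E2]]]]. subst.
    exists x, (mul y t). split; auto. split; [exists y, t; auto|auto].
Qed.

Lemma Pm_one_l X : Pm Po X = X.
Proof.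
  apply seteq; intros z; unfold set_mul, set_one; split.
  - intros [x [y [Hx [Hy E]]]]; subst; rewrite one_l; auto.
  - intros Hz; exists one, z; auto.
Qed.

Lemma Pm_one_r X : Pm X Po = X.
Proof.
  apply seteq; intros z; unfold set_mul, set_one; split.
  - intros [x [y [Hx [Hy E]]]]; subst; rewrite one_r; auto.
  - intros Hz; exists z, one; auto.
Qed.

Lemma Pm_l X Y z : X z -> Y one -> Pm X Y z.
Proof. intros; exists z, one; rewrite one_r; auto. Qed.
Lemma Pm_r X Y z : X one -> Y z -> Pm X Y z.
Proof. intros; exists one, z; rewrite one_l; auto. Qed.

Lemma wp_app a b : wp (a ++ b) = Pm (wp a) (wp b).
Proof.
  induction a as [|x a IH]; simpl. rewrite Pm_one_l; auto.
  rewrite IH, Pm_assoc; auto.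
Qed.

Lemma wp_one a : Forall (fun A => A one) a -> wp a one.
Proof.
  induction 1; simpl. reflexivity. apply Pm_l; auto.
Qed.

Lemma wp_in a L z : Forall (fun A => A one) a -> In L a -> L z -> wp a z.
Proof.
  induction 1; simpl; [tauto|]. intros [E|Hi] Hz.
  - subst. apply Pm_l; auto. apply wp_one; auto.
  - apply Pm_r; auto.
Qed.

Section Dom.
Variable S : H -> Prop.
Hypothesis S1 : S one.
Hypothesis Smul : forall x y, S x -> S y -> S (mul x y).
Notation D := (Pfin1_dom one S).

Lemma D_Po : D Po.
Proof. split; [exists [one]; intros x E; left; auto|split; [reflexivity|intros x E; rewrite E; auto]]. Qed.

Lemma D_Pm X Y : D X -> D Y -> D (Pm X Y).
Proof.
  intros [[l1 F1] [O1 S1']] [[l2 F2] [O2 S2']].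
  split; [|split].
  - exists (flat_map (fun a => map (mul a) l2) l1).
    intros z [x [y [Hx [Hy E]]]]. subst. apply in_flat_map. exists x. split; auto.
    apply in_map; auto.
  - exists one, one; rewrite one_l; auto.
  - intros z [x [y [Hx [Hy E]]]]. subst. auto.
Qed.

Lemma D_sub X Y : D X -> Y one -> (forall z, Y z -> X z) -> D Y.
Proof.
  intros [[l F] [O SX]] Y1 HYX. split; [exists l; auto|split; auto].
Qed.

Lemma div_sub X U V Y : U one -> V one -> Y = Pm (Pm U X) V -> forall z, X z -> Y z.
Proof. intros HU HV E z Hz. subst. apply Pm_l; auto. apply Pm_r; auto. Qed.

Lemma D_one X : D X -> X one.
Proof. intros [_ [O _]]; auto. Qed.

Lemma div_refl X : mdivides D Pm X X.
Proof. exists Po, Po. split; [apply D_Po|split;[apply D_Po|]]. rewrite Pm_one_l, Pm_one_r; auto. Qed.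

Lemma massoc_eq X Y : massociated D Pm X Y <-> X = Y.
Proof.
  split.
  - intros [[U [V [HU [HV E1]]]] [U' [V' [HU' [HV' E2]]]]].
    apply seteq; intros z; split.
    + apply (div_sub (D_one HU) (D_one HV) E1).
    + apply (div_sub (D_one HU') (D_one HV') E2).
  - intros E; subst. split; apply div_refl.
Qed.

Lemma Forall2_assoc a a' : Forall2 (massociated D Pm) a a' <-> a = a'.
Proof.
  split.
  - induction 1; auto. f_equal; auto. apply massoc_eq; auto.
  - intros E; subst. induction a'; constructor; auto. apply massoc_eq; auto.
Qed.

Lemma wle_sub a b : wle D Pm a b <-> sub a b.
Proof.
  split.
  - intros [a' [p [F [Pp Sp]]]]. apply Forall2_assoc in F. subst. exists p; auto.
  - intros [p [Pp Sp]]. exists a, p. split; auto. apply Forall2_assoc; auto.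
Qed.

Lemma ud_iff X : D X -> (unit_divisor D Pm Po X <-> X = Po).
Proof.
  intros DX. unfold unit_divisor. split.
  - intros [U [V [HU [HV E]]]]. apply seteq; intros z; split.
    + apply (div_sub (D_one HU) (D_one HV) E).
    + unfold set_one; intros ->. apply D_one; auto.
  - intros ->. exists Po, Po. split; [apply D_Po|split;[apply D_Po|]].
    rewrite Pm_one_l, Pm_one_r; auto.
Qed.

Definition Irr a := D a /\ a <> Po /\
  ~ (exists x y, D x /\ D y /\ x <> Po /\ y <> Po /\ x <> a /\ y <> a /\ a = Pm x y).

Lemma prop_div_iff x y a : D x -> D y -> a = Pm x y ->
  (mproperly_divides D Pm x a <-> x <> a) /\ (mproperly_divides D Pm y a <-> y <> a).
Proof.
  intros Dx Dy E.
  assert (Hx: forall z, x z -> a z). { intros z Hz; subst; apply Pm_l; auto; apply D_one; auto. }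
  assert (Hy: forall z, y z -> a z). { intros z Hz; subst; apply Pm_r; auto; apply D_one; auto. }
  unfold mproperly_divides. split; split.
  - intros [_ Hn] ->. apply Hn. apply div_refl.
  - intros Hne. split.
    + exists Po, y. split; [apply D_Po|split; auto]. rewrite Pm_one_l; auto.
    + intros [U [V [HU [HV E2]]]]. apply Hne. apply seteq; intros z; split; auto.
      apply (div_sub (D_one HU) (D_one HV) E2).
  - intros [_ Hn] ->. apply Hn. apply div_refl.
  - intros Hne. split.
    + exists x, Po. split; [auto|split; [apply D_Po|]]. rewrite Pm_one_r; auto.
    + intros [U [V [HU [HV E2]]]]. apply Hne. apply seteq; intros z; split; auto.
      apply (div_sub (D_one HU) (D_one HV) E2).
Qed.

Lemma irr_iff a : irreducible D Pm Po a <-> Irr a.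
Proof.
  unfold irreducible, Irr. split.
  - intros [Da [Hu Hn]]. split; auto. split.
    + intros E. apply Hu. apply ud_iff; auto.
    + intros [x [y [Dx [Dy [Px [Py [Nx [Ny E]]]]]]]]. apply Hn.
      destruct (prop_div_iff Dx Dy E) as [Ix Iy].
      exists x, y. refine (conj Dx (conj Dy (conj _ (conj _ (conj _ (conj _ E)))))).
      * intros H1; apply Px; apply ud_iff; auto.
      * intros H1; apply Py; apply ud_iff; auto.
      * apply Ix; auto. * apply Iy; auto.
  - intros [Da [Hu Hn]]. split; auto. split.
    + intros H1; apply Hu; apply ud_iff; auto.
    + intros [x [y [Dx [Dy [Px [Py [Nx [Ny E]]]]]]]]. apply Hn.
      destruct (prop_div_iff Dx Dy E) as [Ix Iy].
      exists x, y. refine (conj Dx (conj Dy (conj _ (conj _ (conj _ (conj _ E)))))).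
      * intros H1; apply Px; apply ud_iff; auto.
      * intros H1; apply Py; apply ud_iff; auto.
      * apply Ix; auto. * apply Iy; auto.
Qed.

Definition Fact a X := Forall Irr a /\ wp a = X.
Definition Min a X := Fact a X /\ ~ (exists b, Fact b X /\ sub b a /\ ~ sub a b).

Lemma fact_iff a X : factorization D Pm Po a X <-> Fact a X.
Proof.
  unfold factorization, Fact. split; intros [F E]; split; auto;
  eapply Forall_impl; try eassumption; intros; apply irr_iff; auto.
Qed.

Lemma min_iff a X : minimal_factorization D Pm Po a X <-> Min a X.
Proof.
  unfold minimal_factorization, Min. rewrite fact_iff. split; intros [F N]; split; auto;
  intros [b [Fb [S1' S2']]]; apply N; exists b.
  - rewrite fact_iff, !wle_sub; auto.
  - rewrite <- fact_iff, <- !wle_sub; auto.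
Qed.

Lemma UmF_iff : UmF D Pm Po <->
  (forall X, D X -> X <> Po -> exists a, Fact a X) /\
  (forall X a b, D X -> Min a X -> Min b X -> sub a b /\ sub b a).
Proof.
  unfold UmF, factorable, wequiv. split; intros [F U]; split.
  - intros X DX N. destruct (F X DX) as [a Ha]. rewrite ud_iff; auto.
    exists a; apply fact_iff; auto.
  - intros X a b DX Ma Mb. rewrite <- !wle_sub. apply (U X); auto; apply min_iff; auto.
  - intros X DX N. destruct (F X DX) as [a Ha]. rewrite <- ud_iff; auto.
    exists a; apply fact_iff; auto.
  - intros X a b DX Ma Mb. rewrite !wle_sub. apply (U X); auto; apply min_iff; auto.
Qed.

Lemma Irr_one a : Irr a -> a one.
Proof. intros [Da _]; apply D_one; auto. Qed.

Lemma wp_D a : Forall Irr a -> D (wp a).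
Proof. induction 1; simpl. apply D_Po. apply D_Pm; auto. destruct H0; auto. Qed.

End Dom.
End PS.

End P2.
Import P2.

Module P3.
Set Implicit Arguments.

Lemma remove_one {H : Type} (l : list H) w : In w l ->
  exists l', length l' < length l /\ forall y, In y l -> y <> w -> In y l'.
Proof.
  induction l as [|a l IH]; simpl; [tauto|]. intros Hw.
  destruct (classic (a = w)) as [E|NE].
  - exists l. split; [lia|]. intros y [E2|Hy] Ny; subst; [congruence|auto].
  - destruct Hw as [E|Hw]; [congruence|]. destruct (IH Hw) as [l' [Hl Hy]].
    exists (a :: l'). split; [simpl; lia|]. intros y [E2|Hy'] Ny; [left; auto|right; auto].
Qed.

Section PS3.
Variables (H : Type) (mul : H -> H -> H) (one : H).
Hypothesis assoc : forall x y z, mul x (mul y z) = mul (mul x y) z.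
Hypothesis one_l : forall x, mul one x = x.
Hypothesis one_r : forall x, mul x one = x.

Notation Pm := (set_mul mul).
Notation Po := (set_one one).
Notation wp := (wprod Pm Po).
Let Pm_l' := @Pm_l H mul one one_r.
Let Pm_r' := @Pm_r H mul one one_l.
Let Pm_one_r' := @Pm_one_r H mul one one_r.
Let Pm_one_l' := @Pm_one_l H mul one one_l.
Let wp_app' := @wp_app H mul one assoc one_l.
Let wp_in' := @wp_in H mul one one_l one_r.
Let D_Pm' := @D_Pm H mul one one_l.
Lemma wp_cons x l : wp (x :: l) = Pm x (wp l). Proof. reflexivity. Qed.
Lemma wp_nil : wp [] = Po. Proof. reflexivity. Qed.

Section Dom3.
Variable S : H -> Prop.
Hypothesis S1 : S one.
Hypothesis Smul : forall x y, S x -> S y -> S (mul x y).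
Notation D := (Pfin1_dom one S).
Notation Irr := (Irr mul one S).
Notation Fact := (Fact mul one S).
Notation Min := (Min mul one S).

Lemma ne_witness (X Y : H -> Prop) z : X z -> ~ Y z -> X <> Y.
Proof. intros Hx Hy E; subst; auto. Qed.

Lemma not_Po (X : H -> Prop) : X one -> X <> Po -> exists w, X w /\ w <> one.
Proof.
  intros X1 N. apply NNPP; intros C. apply N. apply seteq; intros z; split.
  - intros Hz. apply NNPP; intros Nz. apply C. exists z; split; auto.
  - unfold set_one; intros ->; auto.
Qed.

Lemma strict_sub (X Y : H -> Prop) : (forall z, Y z -> X z) -> Y <> X -> exists w, X w /\ ~ Y w.
Proof.
  intros Sub N. apply NNPP; intros C. apply N. apply seteq; intros z; split; auto.
  intros Hz. apply NNPP; intros Nz. apply C. exists z; auto.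
Qed.

Lemma fact_ex X : D X -> X <> Po -> exists a, Fact a X.
Proof.
  assert (G: forall n X0 l, length l <= n -> (forall z, X0 z -> In z l) -> D X0 -> X0 <> Po ->
             exists a, Fact a X0).
  { induction n as [|n IH]; intros X0 l Hl Cov DX NX.
    - destruct (not_Po (D_one DX) NX) as [w [Hw _]]. apply Cov in Hw. destruct l; simpl in *; [tauto|lia].
    - destruct (classic (Irr X0)) as [I|NI].
      + exists [X0]. split; [constructor; auto|]. simpl. apply Pm_one_r'; auto.
      + assert (Ex: exists x y, D x /\ D y /\ x <> Po /\ y <> Po /\ x <> X0 /\ y <> X0 /\ X0 = Pm x y).
        { apply NNPP; intros C. apply NI. split; auto. }
        destruct Ex as [x [y [Dx [Dy [Nx [Ny [Nx' [Ny' E]]]]]]]].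
        assert (Sx: forall z, x z -> X0 z). { intros z Hz; rewrite E; apply Pm_l'; auto. apply D_one in Dy; auto. }
        assert (Sy: forall z, y z -> X0 z). { intros z Hz; rewrite E; apply Pm_r'; auto. apply D_one in Dx; auto. }
        assert (Rx: exists a, Fact a x).
        { destruct (strict_sub Sx Nx') as [w [Hw Nw]].
          destruct (remove_one l w (Cov w Hw)) as [l' [Hl' Hc]].
          apply (IH x l'); auto; [lia|]. intros z Hz. apply Hc; auto. intros ->; auto. }
        assert (Ry: exists a, Fact a y).
        { destruct (strict_sub Sy Ny') as [w [Hw Nw]].
          destruct (remove_one l w (Cov w Hw)) as [l' [Hl' Hc]].
          apply (IH y l'); auto; [lia|]. intros z Hz. apply Hc; auto. intros ->; auto. }
        destruct Rx as [ax [Fx Ex]]. destruct Ry as [ay [Fy Ey]].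
        exists (ax ++ ay). split. apply Forall_app; auto.
        rewrite wp_app'; auto. rewrite Ex, Ey; auto. }
  intros DX NX. destruct DX as [[l Hl] R]. apply (G (length l) X l); auto. split; auto. exists l; auto.
Qed.

Definition pr (b : H) : H -> Prop := fun z => z = one \/ z = b.

Lemma D_pr b : S b -> D (pr b).
Proof.
  intros Sb. split; [exists [one; b]; intros z [->| ->]; simpl; auto|].
  split; [left; auto|]. intros z [->| ->]; auto.
Qed.

Lemma Irr_pr b : S b -> b <> one -> Irr (pr b).
Proof.
  intros Sb Nb. split; [apply D_pr; auto|split].
  - intros E. apply Nb. assert (pr b b) by (right; auto). rewrite E in H0. auto.
  - intros [x [y [Dx [Dy [Nx [Ny [Nx' [Ny' E]]]]]]]]. apply Nx'.
    destruct (not_Po (D_one Dx) Nx) as [w [Hw Nw]].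
    assert (Sx: forall z, x z -> pr b z). { intros z Hz; rewrite E; apply Pm_l'; auto. apply D_one in Dy; auto. }
    assert (w = b). { destruct (Sx w Hw); tauto. } subst w.
    apply seteq; intros z; split; auto. intros [->| ->]; auto. exact (D_one Dx).
Qed.

Lemma pm_pr a b z : Pm (pr a) (pr b) z <-> z = one \/ z = a \/ z = b \/ z = mul a b.
Proof.
  unfold set_mul, pr. split.
  - intros [p [q [[-> | ->] [[-> | ->] ->]]]]; rewrite ?one_l, ?one_r; tauto.
  - intros [->|[->|[->| ->]]].
    + exists one, one; rewrite one_l; tauto.
    + exists a, one; rewrite one_r; tauto.
    + exists one, b; rewrite one_l; tauto.
    + exists a, b; tauto.
Qed.

Lemma pm_pr_l a (Y : H -> Prop) z : Pm (pr a) Y z <-> Y z \/ exists y, Y y /\ z = mul a y.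
Proof.
  unfold set_mul, pr. split.
  - intros [p [q [[-> | ->] [Hq ->]]]]; [rewrite one_l; auto|right; exists q; auto].
  - intros [Hz|[y [Hy ->]]]; [exists one, z; rewrite one_l; tauto|exists a, y; tauto].
Qed.

Lemma not_umf X a b : D X -> Min a X -> Min b X -> ~ (sub a b /\ sub b a) -> ~ UmF D Pm Po.
Proof.
  intros DX Ma Mb N U. apply (UmF_iff mul one one_l one_r S S1) in U. destruct U as [_ U].
  apply N. apply (U X); auto.
Qed.

Lemma Min2 a1 a2 X : Irr a1 -> Irr a2 -> X = Pm a1 a2 -> X <> Po -> X <> a1 -> X <> a2 ->
  Min [a1; a2] X.
Proof.
  intros I1 I2 E N0 N1 N2. split.
  - split; [constructor; [exact I1|constructor; [exact I2|constructor]]|]. rewrite !wp_cons, wp_nil, Pm_one_r'; auto.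
  - intros [b [[_ Eb] [Sb Nb]]]. destruct (proper_sub Sb Nb) as [L Inc].
    destruct b as [|c [|d b]]; simpl in L.
    + apply N0; rewrite <- Eb; reflexivity.
    + rewrite !wp_cons, wp_nil, Pm_one_r' in Eb; auto. destruct (Inc c) as [->|[->|[]]]; simpl; auto.
    + lia.
Qed.

Lemma Min3 A X : Irr A -> X = Pm A (Pm A A) -> X <> Po -> X <> A -> X <> Pm A A ->
  Min [A; A; A] X.
Proof.
  intros I1 E N0 N1 N2. split.
  - split; [constructor; [exact I1|constructor; [exact I1|constructor; [exact I1|constructor]]]|]. rewrite !wp_cons, wp_nil, Pm_one_r'; auto.
  - intros [b [[_ Eb] [Sb Nb]]]. destruct (proper_sub Sb Nb) as [L Inc].
    assert (HA: forall c, In c b -> c = A). { intros c Hc. destruct (Inc c Hc) as [->|[->|[->|[]]]]; auto. }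
    destruct b as [|c [|d [|e b]]]; simpl in L.
    + apply N0; rewrite <- Eb; reflexivity.
    + rewrite !wp_cons, wp_nil, Pm_one_r' in Eb; auto. rewrite (HA c) in Eb; simpl; auto.
    + rewrite !wp_cons, wp_nil, Pm_one_r' in Eb; auto. rewrite (HA c), (HA d) in Eb; simpl; auto.
    + lia.
Qed.

Lemma noneq_l (A B C : H -> Prop) : B <> C -> ~ (sub [A;B] [A;C] /\ sub [A;C] [A;B]).
Proof. intros N [S' _]. apply sub2 in S'. intuition congruence. Qed.

Lemma noneq_r (A B C : H -> Prop) : B <> C -> ~ (sub [B;A] [C;A] /\ sub [C;A] [B;A]).
Proof. intros N [S' _]. apply sub2 in S'. intuition congruence. Qed.

Lemma wit_pair A B C X : Irr A -> Irr B -> Irr C -> X = Pm A B -> X = Pm A C ->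
  X <> Po -> X <> A -> X <> B -> X <> C -> B <> C -> ~ UmF D Pm Po.
Proof.
  intros IA IB IC E1 E2 N0 NA NB NC BC.
  apply (@not_umf X [A;B] [A;C]).
  - rewrite E1. apply D_Pm'; auto; apply IA || apply IB.
  - apply Min2; auto.
  - apply Min2; auto.
  - apply noneq_l; auto.
Qed.

Lemma wit_pair_r A B C X : Irr A -> Irr B -> Irr C -> X = Pm B A -> X = Pm C A ->
  X <> Po -> X <> A -> X <> B -> X <> C -> B <> C -> ~ UmF D Pm Po.
Proof.
  intros IA IB IC E1 E2 N0 NA NB NC BC.
  apply (@not_umf X [B;A] [C;A]).
  - rewrite E1. apply D_Pm'; auto; apply IA || apply IB.
  - apply Min2; auto.
  - apply Min2; auto.
  - apply noneq_r; auto.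
Qed.

End Dom3.

(* transfer to a divisor-closed sub-power-monoid *)
Section Transfer.
Variables S S' : H -> Prop.
Hypothesis S1 : S one.
Hypothesis Smul : forall x y, S x -> S y -> S (mul x y).
Hypothesis S1' : S' one.
Hypothesis Smul' : forall x y, S' x -> S' y -> S' (mul x y).
Hypothesis SS' : forall x, S' x -> S x.

Lemma D_incl X : Pfin1_dom one S' X -> Pfin1_dom one S X.
Proof. intros [F [O Sx]]; split; auto. Qed.

Lemma Irr_tr a : Pfin1_dom one S' a -> (Irr mul one S a <-> Irr mul one S' a).
Proof.
  intros Da. unfold Irr. split.
  - intros [_ [N C]]. split; auto. split; auto. intros [x [y [Dx [Dy R]]]]. apply C.
    exists x, y. split; [apply D_incl; auto|split; [apply D_incl; auto|auto]].
  - intros [_ [N C]]. split; [apply D_incl; auto|]. split; auto.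
    intros [x [y [Dx [Dy [Nx [Ny [Nx' [Ny' E]]]]]]]]. apply C.
    exists x, y. split; [|split]; auto.
    + apply (D_sub _ Da); [exact (D_one Dx)|]. intros z Hz; rewrite E; apply Pm_l'; auto. apply D_one in Dy; auto.
    + apply (D_sub _ Da); [exact (D_one Dy)|]. intros z Hz; rewrite E; apply Pm_r'; auto. apply D_one in Dx; auto.
Qed.

Lemma Fact_tr a X : Pfin1_dom one S' X -> (Fact mul one S a X <-> Fact mul one S' a X).
Proof.
  intros DX. unfold Fact. split; intros [F E]; (split; [|exact E]).
  - assert (F1: Forall (fun A => A one) a). { eapply Forall_impl; [|exact F]. intros; eapply Irr_one; eauto. }
    rewrite Forall_forall. intros L HL. assert (IL: Irr mul one S L) by (rewrite Forall_forall in F; auto).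
    assert (DL: Pfin1_dom one S' L).
    { apply (D_sub _ DX). eapply Irr_one; eauto. intros z Hz. rewrite <- E. eapply wp_in'; eauto. }
    exact (proj1 (Irr_tr DL) IL).
  - eapply Forall_impl; [|exact F]. intros L IL. exact (proj2 (Irr_tr (proj1 IL)) IL).
Qed.

Lemma Min_tr a X : Pfin1_dom one S' X -> (Min mul one S a X <-> Min mul one S' a X).
Proof.
  intros DX. unfold Min. rewrite Fact_tr; auto. split; intros [F N]; split; auto;
  intros [b [Fb R]]; apply N; exists b; split; auto; apply Fact_tr; auto.
Qed.

End Transfer.
End PS3.

End P3.
Import P3.

Module P4.
Set Implicit Arguments.

Section AtoB.
Variables (H : Type) (mul : H -> H -> H) (one : H).
Hypothesis assoc : forall x y z, mul x (mul y z) = mul (mul x y) z.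
Hypothesis one_l : forall x, mul one x = x.
Hypothesis one_r : forall x, mul x one = x.

Notation Pm := (set_mul mul).
Notation Po := (set_one one).
Notation unit := (is_unit mul one).
Definition ST : H -> Prop := fun _ => True.
Notation DT := (Pfin1_dom one ST).
Notation pr := (pr one).

Hypothesis U : UmF DT Pm Po.

Let pm_pr' := pm_pr mul one one_l one_r.
Let pm_pr_l' := pm_pr_l mul one one_l.
Lemma ST1 : ST one. Proof. exact I. Qed.
Lemma STm : forall x y, ST x -> ST y -> ST (mul x y). Proof. intros; exact I. Qed.
Lemma IrrT b : b <> one -> Irr mul one ST (pr b).
Proof. intros; apply (Irr_pr mul one_r ST I); auto; exact I. Qed.

Lemma one_unit : unit one.
Proof. exists one; rewrite one_l; auto. Qed.

Lemma nw z (X Y : H -> Prop) : X z -> ~ Y z -> X <> Y.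
Proof. apply ne_witness. Qed.

Lemma Pm_ne_Po a b : a <> one -> Pm (pr a) (pr b) <> Po.
Proof. intros N. apply (nw a); [apply pm_pr'; tauto|unfold set_one; auto]. Qed.

Lemma L_pow a : a <> one -> mul a a <> one -> mul a a <> a -> False.
Proof.
  intros N1 N2 N3.
  assert (NA: pr a <> pr (mul a a)).
  { apply (nw a); [right; auto|unfold pr; intros [E|E]; auto]. }
  destruct (classic (mul a (mul a a) = one \/ mul a (mul a a) = a \/ mul a (mul a a) = mul a a)) as [H3|H3].
  - enough (NU: ~ UmF DT Pm Po) by exact (NU U). apply (wit_pair one_l one_r ST1 STm (A := pr a) (B := pr a) (C := pr (mul a a)) (X := Pm (pr a) (pr a)));
      try apply IrrT; auto.
    + apply seteq; intros z; rewrite !pm_pr'.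
      destruct H3 as [E|[E|E]]; rewrite E; intuition.
    + apply Pm_ne_Po; auto.
    + apply (nw (mul a a)); [apply pm_pr'; tauto|unfold pr; intros [E|E]; auto].
    + apply (nw (mul a a)); [apply pm_pr'; tauto|unfold pr; intros [E|E]; auto].
    + apply (nw a); [apply pm_pr'; tauto|unfold pr; intros [E|E]; auto].
  - enough (NU: ~ UmF DT Pm Po) by exact (NU U). apply (not_umf one_l one_r ST1 (X := Pm (pr a) (pr (mul a a))) (a := [pr a; pr a; pr a]) (b := [pr a; pr (mul a a)])).
    + apply (D_Pm mul one_l STm); apply D_pr; exact I.
    + apply (Min3 one_r); [apply IrrT; auto| | | |].
      * apply seteq; intros z; rewrite pm_pr', pm_pr_l'. setoid_rewrite pm_pr'. split.
        -- intros [E|[E|[E|E]]]; [left; auto|left; auto|left; auto|right; exists (mul a a); auto].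
        -- intros [E|[y [[E|[E|[E|E]]] Ez]]]; subst; rewrite ?one_r; tauto.
      * apply Pm_ne_Po; auto.
      * apply (nw (mul a a)); [apply pm_pr'; tauto|unfold pr; intros [E|E]; auto].
      * apply (nw (mul a (mul a a))); [apply pm_pr'; tauto|rewrite pm_pr'; tauto].
    + apply (Min2 one_r); try apply IrrT; auto.
      * apply Pm_ne_Po; auto.
      * apply (nw (mul a a)); [apply pm_pr'; tauto|unfold pr; intros [E|E]; auto].
      * apply (nw a); [apply pm_pr'; tauto|unfold pr; intros [E|E]; auto].
    + intros [S1' _]. apply sub_len in S1'. simpl in S1'. lia.
Qed.

Lemma inv_invol u : unit u -> u <> one -> mul u u = one.
Proof.
  intros [v [Hv1 Hv2]] N. apply NNPP; intros N2. apply (L_pow N N2).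
  intros E. apply N. assert (Q: u = mul (mul u u) v) by (rewrite <- assoc, Hv1, one_r; auto).
  rewrite E in Q. rewrite Q; exact Hv1.
Qed.

Lemma idem x : ~ unit x -> mul x x = x.
Proof.
  intros Nx. apply NNPP; intros N3. apply (L_pow (a := x)); auto.
  - intros ->. apply Nx, one_unit.
  - intros E. apply Nx. exists x; auto.
Qed.

Lemma semi x y : ~ unit x -> ~ unit y -> ~ unit (mul x y).
Proof.
  intros Nx Ny [w [Hw1 Hw2]]. apply Nx.
  assert (Q: mul x (mul (mul x y) w) = mul (mul (mul x x) y) w) by (rewrite !assoc; auto).
  rewrite Hw1, one_r, (idem Nx), Hw1 in Q. rewrite Q; apply one_unit.
Qed.

Lemma unit_ne_nonunit u y : unit u -> ~ unit y -> u <> y.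
Proof. intros Hu Hy ->; auto. Qed.

Lemma wit_invol u v : unit u -> unit v -> u <> one -> v <> one -> u <> v -> False.
Proof.
  intros Hu Hv N1 N2 N3.
  pose proof (inv_invol Hu N1) as Huu. pose proof (inv_invol Hv N2) as Hvv.
  assert (E1: mul u (mul u v) = v) by (rewrite assoc, Huu, one_l; auto).
  assert (Nuv1: mul u v <> one). { intros E. apply N3. rewrite <- E1, E, one_r; auto. }
  assert (Nuv2: mul u v <> u). { intros E. apply N2. rewrite <- E1, E, Huu; auto. }
  assert (Nuv3: mul u v <> v). { intros E. apply N1. rewrite <- (one_r u), <- Hvv, assoc, E, Hvv; auto. }
  enough (NU: ~ UmF DT Pm Po) by exact (NU U). apply (wit_pair one_l one_r ST1 STm (A := pr u) (B := pr v) (C := pr (mul u v)) (X := Pm (pr u) (pr v)));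
    try apply IrrT; auto.
  - apply seteq; intros z; rewrite !pm_pr'. rewrite E1. tauto.
  - apply Pm_ne_Po; auto.
  - apply (nw v); [apply pm_pr'; tauto|unfold pr; intros [E|E]; auto].
  - apply (nw u); [apply pm_pr'; tauto|unfold pr; intros [E|E]; auto].
  - apply (nw u); [apply pm_pr'; tauto|unfold pr; intros [E|E]; auto].
  - apply (nw v); [right; auto|unfold pr; intros [E|E]; auto].
Qed.

Lemma wit_ext_l u y : unit u -> u <> one -> ~ unit y -> mul u y = y.
Proof.
  intros Hu N1 Ny. apply NNPP; intros N3.
  pose proof (inv_invol Hu N1) as Huu.
  assert (E1: mul u (mul u y) = y) by (rewrite assoc, Huu, one_l; auto).
  assert (Ny1: y <> one) by (intros ->; apply Ny, one_unit).
  assert (Nuy1: mul u y <> one). { intros E. apply Ny. exists u. split; [rewrite <- E1, E, one_r; auto|].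
    rewrite <- E. rewrite <- E1 at 1. rewrite E, one_r; auto. }
  assert (Nuy2: mul u y <> u). { intros E. apply Ny1. rewrite <- E1, E, Huu; auto. }
  assert (Nuy: u <> y) by (apply unit_ne_nonunit; auto).
  enough (NU: ~ UmF DT Pm Po) by exact (NU U). apply (wit_pair one_l one_r ST1 STm (A := pr u) (B := pr y) (C := pr (mul u y)) (X := Pm (pr u) (pr y)));
    try apply IrrT; auto.
  - apply seteq; intros z; rewrite !pm_pr'. rewrite E1. tauto.
  - apply Pm_ne_Po; auto.
  - apply (nw y); [apply pm_pr'; tauto|unfold pr; intros [E|E]; auto].
  - apply (nw u); [apply pm_pr'; tauto|unfold pr; intros [E|E]; auto].
  - apply (nw u); [apply pm_pr'; tauto|unfold pr; intros [E|E]; auto].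
  - apply (nw y); [right; auto|unfold pr; intros [E|E]; auto].
Qed.

Lemma wit_ext_r u y : unit u -> u <> one -> ~ unit y -> mul y u = y.
Proof.
  intros Hu N1 Ny. apply NNPP; intros N3.
  pose proof (inv_invol Hu N1) as Huu.
  assert (E1: mul (mul y u) u = y) by (rewrite <- assoc, Huu, one_r; auto).
  assert (Ny1: y <> one) by (intros ->; apply Ny, one_unit).
  assert (Nuy1: mul y u <> one). { intros E. apply Ny. exists u. split; [|rewrite <- E1, E, one_l; auto].
    rewrite <- E. rewrite <- E1 at 1. rewrite E, one_l; auto. }
  assert (Nuy2: mul y u <> u). { intros E. apply Ny1. rewrite <- E1, E, Huu; auto. }
  assert (Nuy: u <> y) by (apply unit_ne_nonunit; auto).
  enough (NU: ~ UmF DT Pm Po) by exact (NU U). apply (wit_pair_r one_l one_r ST1 STm (A := pr u) (B := pr y) (C := pr (mul y u)) (X := Pm (pr y) (pr u)));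
    try apply IrrT; auto.
  - apply seteq; intros z; rewrite !pm_pr'. rewrite E1. tauto.
  - apply Pm_ne_Po; auto.
  - apply (nw y); [apply pm_pr'; tauto|unfold pr; intros [E|E]; auto].
  - apply (nw u); [apply pm_pr'; tauto|unfold pr; intros [E|E]; auto].
  - apply (nw u); [apply pm_pr'; tauto|unfold pr; intros [E|E]; auto].
  - apply (nw y); [right; auto|unfold pr; intros [E|E]; auto].
Qed.


Definition tr (x y : H) : H -> Prop := fun z => z = one \/ z = x \/ z = y.

Lemma wit_ab x y : ~ unit x -> ~ unit y -> mul x y <> x -> mul x y <> y ->
  mul y x <> x -> mul y x <> y -> False.
Proof.
  intros Nx Ny N1 N2 N3 N4.
  assert (Ix: mul x x = x) by (apply idem; auto).
  assert (Iy: mul y y = y) by (apply idem; auto).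
  assert (Nxy: x <> y) by (intros ->; auto).
  assert (Nx1: x <> one) by (intros ->; apply Nx, one_unit).
  assert (Ny1: y <> one) by (intros ->; apply Ny, one_unit).
  assert (Nxy1: mul x y <> one) by (intros E; apply (semi Nx Ny); rewrite E; apply one_unit).
  assert (Nyx1: mul y x <> one) by (intros E; apply (semi Ny Nx); rewrite E; apply one_unit).
  assert (DC: DT (tr x y)).
  { split; [exists [one; x; y]; intros z [->|[->| ->]]; simpl; auto|split; [left; auto|intros; exact I]]. }
  assert (IC: Irr mul one ST (tr x y)).
  { split; auto. split.
    - apply (nw x); [right; left; auto|unfold set_one; auto].
    - intros [p [q [Dp [Dq [Np [Nq [Np' [Nq' E]]]]]]]].
      assert (Sp: forall z, p z -> tr x y z). { intros z Hz; rewrite E; apply (Pm_l mul one one_r); auto. exact (D_one Dq). }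
      assert (Sq: forall z, q z -> tr x y z). { intros z Hz; rewrite E; apply (Pm_r mul one one_l); auto. exact (D_one Dp). }
      assert (Cp: ~ (p x /\ p y)).
      { intros [px py]. apply Np'. apply seteq; intros z; split; auto. intros [->|[->| ->]]; auto. exact (D_one Dp). }
      assert (Cq: ~ (q x /\ q y)).
      { intros [qx qy]. apply Nq'. apply seteq; intros z; split; auto. intros [->|[->| ->]]; auto. exact (D_one Dq). }
      assert (Hp: p x \/ p y).
      { destruct (not_Po (D_one Dp) Np) as [w [Hw Nw]]. destruct (Sp w Hw) as [E1|[E1|E1]]; subst; auto; tauto. }
      assert (Hq: q x \/ q y).
      { destruct (not_Po (D_one Dq) Nq) as [w [Hw Nw]]. destruct (Sq w Hw) as [E1|[E1|E1]]; subst; auto; tauto. }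
      assert (Mxy: ~ (p x /\ q y)).
      { intros [px qy]. assert (tr x y (mul x y)) by (rewrite E; exists x, y; auto).
        destruct H0 as [E1|[E1|E1]]; auto. }
      assert (Myx: ~ (p y /\ q x)).
      { intros [py qx]. assert (tr x y (mul y x)) by (rewrite E; exists y, x; auto).
        destruct H0 as [E1|[E1|E1]]; auto. }
      destruct Hp as [px|py]; destruct Hq as [qx|qy]; try tauto.
      + assert (npy: ~ p y) by tauto. assert (nqy: ~ q y) by tauto.
        assert (tr x y y) by (right; right; auto). rewrite E in H0.
        destruct H0 as [s [t [Hs [Ht Ey]]]].
        assert (s = one \/ s = x). { destruct (Sp s Hs) as [E1|[E1|E1]]; [left; auto|right; auto|rewrite E1 in Hs; tauto]. }
        assert (t = one \/ t = x). { destruct (Sq t Ht) as [E1|[E1|E1]]; [left; auto|right; auto|rewrite E1 in Ht; tauto]. }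
        destruct H0 as [-> | ->]; destruct H1 as [-> | ->]; rewrite ?one_l, ?one_r, ?Ix in Ey; auto.
      + assert (npx: ~ p x) by tauto. assert (nqx: ~ q x) by tauto.
        assert (tr x y x) by (right; left; auto). rewrite E in H0.
        destruct H0 as [s [t [Hs [Ht Ey]]]].
        assert (s = one \/ s = y). { destruct (Sp s Hs) as [E1|[E1|E1]]; [left; auto|rewrite E1 in Hs; tauto|right; auto]. }
        assert (t = one \/ t = y). { destruct (Sq t Ht) as [E1|[E1|E1]]; [left; auto|rewrite E1 in Ht; tauto|right; auto]. }
        destruct H0 as [-> | ->]; destruct H1 as [-> | ->]; rewrite ?one_l, ?one_r, ?Iy in Ey; auto. }
  enough (NU: ~ UmF DT Pm Po) by exact (NU U).
  apply (wit_pair one_l one_r ST1 STm (A := pr x) (B := pr y) (C := tr x y) (X := Pm (pr x) (pr y)));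
    try apply IrrT; auto.
  - apply seteq; intros z; rewrite pm_pr', pm_pr_l'. unfold tr. split.
    + intros [E|[E|[E|E]]]; [left; auto|left; auto|left; auto|right; exists y; auto].
    + intros [E|[c [[E|[E|E]] Ez]]]; subst; rewrite ?one_r, ?Ix; tauto.
  - apply Pm_ne_Po; auto.
  - apply (nw y); [apply pm_pr'; tauto|unfold pr; intros [E|E]; auto].
  - apply (nw x); [apply pm_pr'; tauto|unfold pr; intros [E|E]; auto].
  - apply (nw (mul x y)); [apply pm_pr'; tauto|unfold tr; intros [E|[E|E]]; auto].
  - apply not_eq_sym. apply (nw x); [unfold tr; right; left; auto|unfold pr; intros [E|E]; auto].
Qed.

Definition K : H -> Prop := fun x => ~ unit x \/ x = one.

Lemma K1 : K one. Proof. right; auto. Qed.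
Lemma Kmul x y : K x -> K y -> K (mul x y).
Proof.
  intros [Nx| ->] [Ny| ->]; rewrite ?one_l, ?one_r; unfold K; auto.
  left; apply semi; auto.
Qed.

Lemma part_b :
  subsemigroup mul (fun x => ~ unit x) /\
  almost_breakable mul (fun x => ~ unit x) /\
  units_order_le2 mul one /\
  trivial_ideal_extension mul one /\
  Pfin1_UmF mul one K.
Proof.
  split; [|split; [|split; [|split]]].
  - intros x y; apply semi.
  - intros x y Nx Ny. apply NNPP; intros C. apply (wit_ab Nx Ny); intros E; apply C; auto.
  - destruct (classic (exists u, unit u /\ u <> one)) as [[u [Hu Nu]]|N].
    + exists one, u. intros v Hv. apply NNPP; intros C.
      apply (wit_invol Hu Hv Nu); intros E; apply C; auto.
    + exists one, one. intros v Hv. left. apply NNPP; intros C. apply N. exists v; auto.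
  - intros u y Hu Ny. destruct (classic (u = one)) as [->|Nu].
    + rewrite one_l, one_r; auto.
    + split; [apply wit_ext_l|apply wit_ext_r]; auto.
  - unfold Pfin1_UmF. apply (UmF_iff mul one one_l one_r K K1). split.
    + intros X DX NX. apply (fact_ex mul assoc one_l one_r DX NX).
    + intros X a b DX Ma Mb.
      assert (SS: forall x, K x -> ST x) by (intros; exact I).
      apply (Min_tr mul one_l one_r ST SS) in Ma; auto.
      apply (Min_tr mul one_l one_r ST SS) in Mb; auto.
      apply (UmF_iff mul one one_l one_r ST ST1) in U. destruct U as [_ U2].
      apply (U2 X); auto. destruct DX as [F [O _]]; split; [exact F|split; [exact O|intros; exact I]].
Qed.

End AtoB.

End P4.
Import P4.

Module P5.
Set Implicit Arguments.

Section BtoA.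
Variables (H : Type) (mul : H -> H -> H) (one : H).
Hypothesis assoc : forall x y z, mul x (mul y z) = mul (mul x y) z.
Hypothesis one_l : forall x, mul one x = x.
Hypothesis one_r : forall x, mul x one = x.

Notation Pm := (set_mul mul).
Notation Po := (set_one one).
Notation wp := (wprod Pm Po).
Notation unit := (is_unit mul one).
Notation DT := (Pfin1_dom one ((@ST H))).
Notation K := (K mul one).
Notation DK := (Pfin1_dom one K).
Notation pr := (pr one).

Hypothesis semi' : subsemigroup mul (fun x => ~ unit x).
Hypothesis le2 : units_order_le2 mul one.
Hypothesis tie : trivial_ideal_extension mul one.
Hypothesis UK : UmF DK Pm Po.

Lemma K1' : K one. Proof. right; auto. Qed.
Lemma Kmul' x y : K x -> K y -> K (mul x y).
Proof.
  intros [Nx| ->] [Ny| ->]; rewrite ?one_l, ?one_r; unfold P4.K; auto.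
Qed.
Lemma ST1' : (@ST H) one. Proof. exact I. Qed.
Lemma STm' : forall x y, (@ST H) x -> (@ST H) y -> (@ST H) (mul x y). Proof. intros; exact I. Qed.
Lemma SS : forall x, K x -> (@ST H) x. Proof. intros; exact I. Qed.

Lemma one_unit' : unit one.
Proof. exists one; rewrite one_l; auto. Qed.

Section WithU.
Variable u : H.
Hypothesis Hu : unit u.
Hypothesis Nu : u <> one.

Lemma units_two v : unit v -> v = one \/ v = u.
Proof.
  destruct le2 as [u0 [u1 Hl]]. intros Hv.
  destruct (Hl one one_unit') as [E1|E1]; destruct (Hl u Hu) as [E2|E2];
  destruct (Hl v Hv) as [E3|E3]; subst; auto; congruence.
Qed.

Lemma uu : mul u u = one.
Proof.
  destruct Hu as [w [Hw1 Hw2]].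
  assert (Huu: unit (mul u u)).
  { exists (mul w w). split.
    - rewrite <- assoc, (assoc u w w), Hw1, one_l, Hw1; auto.
    - rewrite <- assoc, (assoc w u u), Hw2, one_l, Hw2; auto. }
  destruct (units_two Huu) as [E|E]; auto. exfalso; apply Nu.
  assert (Q: mul (mul u u) w = u) by (rewrite <- assoc, Hw1, one_r; auto).
  rewrite E, Hw1 in Q. auto.
Qed.

Lemma notKu : ~ K u.
Proof. intros [N|E]; auto. Qed.

Lemma Kdisc z : K z \/ z = u.
Proof.
  destruct (classic (unit z)) as [Hz|Hz]; [|left; left; auto].
  destruct (units_two Hz); [left; right|right]; auto.
Qed.

Notation E := (pr u).

Lemma EY (Y : H -> Prop) : Y one -> Pm E Y = (fun z => Y z \/ z = u).
Proof.
  intros Y1. apply seteq; intros z. rewrite (pm_pr_l mul one one_l). split.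
  - intros [Hz|[y [Hy ->]]]; [left; auto|].
    destruct (classic (unit y)) as [Uy|Uy].
    + destruct (units_two Uy) as [-> | ->]; [right; rewrite one_r; auto|left; rewrite uu; auto].
    + left. rewrite (proj1 (tie Hu Uy)); auto.
  - intros [Hz| ->]; [left; auto|right; exists one; rewrite one_r; auto].
Qed.

Lemma YE (Y : H -> Prop) : Y one -> Pm Y E = (fun z => Y z \/ z = u).
Proof.
  intros Y1. apply seteq; intros z. unfold set_mul, P3.pr. split.
  - intros [y [e [Hy [[-> | ->] ->]]]]; [rewrite one_r; left; auto|].
    destruct (classic (unit y)) as [Uy|Uy].
    + destruct (units_two Uy) as [-> | ->]; [right; rewrite one_l; auto|left; rewrite uu; auto].
    + left. rewrite (proj2 (tie Hu Uy)); auto.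
  - intros [Hz| ->]; [exists z, one; rewrite one_r; auto|exists one, u; rewrite one_l; auto].
Qed.

Lemma Ecomm (Y : H -> Prop) : Y one -> Pm E Y = Pm Y E.
Proof. intros; rewrite EY, YE; auto. Qed.

Lemma EE : Pm E E = E.
Proof.
  rewrite EY; [|left; auto]. apply seteq; intros z; unfold P3.pr; tauto.
Qed.

Lemma IrrE : Irr mul one ((@ST H)) E.
Proof. apply (Irr_pr mul one_r ((@ST H)) I); auto; exact I. Qed.

Definition pi (X : H -> Prop) : H -> Prop := fun z => X z /\ K z.

Lemma DK_pi X : DT X -> DK (pi X).
Proof.
  intros [[l F] [O _]]. split; [exists l; intros z [Hz _]; auto|split].
  - split; auto. apply K1'.
  - intros z [_ Hz]; auto.
Qed.

Lemma X_u X : DT X -> X u -> X = Pm E (pi X).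
Proof.
  intros DX Xu. rewrite EY; [|split; [exact (D_one DX)|apply K1']].
  apply seteq; intros z; unfold pi; split.
  - intros Hz. destruct (Kdisc z); auto.
  - intros [[Hz _]| ->]; auto.
Qed.

Lemma X_nu X : DT X -> ~ X u -> X = pi X.
Proof.
  intros DX Xu. apply seteq; intros z; unfold pi; split.
  - intros Hz. destruct (Kdisc z) as [Kz| ->]; tauto.
  - tauto.
Qed.

Lemma letter_E A : Irr mul one ((@ST H)) A -> A u -> A = E.
Proof.
  intros IA Au. destruct IA as [DA [NA NI]].
  destruct (classic (pi A = Po)) as [P|P].
  - rewrite (X_u DA Au), P. apply (Pm_one_r mul one one_r).
  - exfalso. apply NI. exists E, (pi A).
    assert (DE: DT E) by (apply D_pr; exact I).
    assert (DpA: DT (pi A)) by (destruct (DK_pi DA) as [F0 [O0 _]]; split; [exact F0|split; [exact O0|intros; exact I]]).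
    split; [auto|split; [auto|split; [|split; [auto|split; [|split]]]]].
    + apply (nw (H:=H) u); [right; auto|unfold set_one; auto].
    + destruct (not_Po (D_one DpA) P) as [w [[Hw Kw] Nw]].
      apply not_eq_sym. apply (nw w); auto. unfold P3.pr. intros [E1|E1]; auto. subst; apply notKu; auto.
    + apply not_eq_sym. apply (nw u); [auto|unfold pi; intros [_ Ku]; apply notKu; auto].
    + apply X_u; auto.
Qed.

Lemma letter_K A : Irr mul one ((@ST H)) A -> A <> E -> Irr mul one K A.
Proof.
  intros IA NE. assert (DA: DK A).
  { pose proof IA as IA'. destruct IA' as [[F [O _]] _]. split; auto. split; auto. intros z Hz.
    destruct (Kdisc z) as [Kz| ->]; auto. exfalso; apply NE, letter_E; auto. }
  exact (proj1 (Irr_tr mul one_l one_r (@ST H) SS DA) IA).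
Qed.

Definition filt (a : list (H -> Prop)) := filter (fun A => if deq A E then false else true) a.

Lemma filt_irr a : Forall (Irr mul one ((@ST H))) a -> Forall (Irr mul one K) (filt a).
Proof.
  induction 1; simpl; [constructor|]. destruct (deq x E); auto. constructor; auto. apply letter_K; auto.
Qed.

Lemma filt_irrT a : Forall (Irr mul one ((@ST H))) a -> Forall (Irr mul one ((@ST H))) (filt a).
Proof.
  induction 1; simpl; [constructor|]. destruct (deq x E); auto.
Qed.

Lemma decomp a : Forall (Irr mul one ((@ST H))) a ->
  (In E a /\ wp a = Pm E (wp (filt a))) \/ (~ In E a /\ wp a = wp (filt a)).
Proof.
  induction 1 as [|x t Ix Ft IH]; [right; split; auto|].
  unfold filt; simpl; fold (filt t). destruct (deq x E) as [->|NE].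
  - left. split; [left; auto|]. change (wp (E :: t)) with (Pm E (wp t)).
    destruct IH as [[_ Et]|[_ Et]]; rewrite Et; auto.
    rewrite (Pm_assoc mul assoc), EE; auto.
  - change (wp (x :: t)) with (Pm x (wp t)). change (wp (x :: filt t)) with (Pm x (wp (filt t))).
    destruct IH as [[It Et]|[It Et]].
    + left. split; [right; auto|]. rewrite Et.
      rewrite !(Pm_assoc mul assoc), <- Ecomm; auto. eapply Irr_one; eauto.
    + right. split; [intros [E1|E1]; auto|]. rewrite Et; auto.
Qed.

Lemma WK a : Forall (Irr mul one ((@ST H))) a -> DK (wp (filt a)).
Proof. intros F. apply (wp_D one_l K1' Kmul'). apply filt_irr; auto. Qed.

Lemma main a X : DT X -> Min mul one ((@ST H)) a X ->
  (In E a <-> X u) /\ cnt E a <= 1 /\ Min mul one K (filt a) (pi X).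
Proof.
  intros DX [[F Ea] Mn].
  set (W := wp (filt a)).
  assert (DW: DK W) by (apply WK; auto).
  assert (W1: W one) by exact (D_one DW).
  assert (WKs: forall z, W z -> K z) by (destruct DW as [_ [_ HH]]; auto).
  assert (piW: forall Y, (forall z, Y z /\ K z <-> W z) -> pi Y = W).
  { intros Y HY. apply seteq; intros z; unfold pi; apply HY. }
  assert (Fc: Forall (Irr mul one ((@ST H))) (filt a)) by (apply filt_irrT; auto).
  assert (cntf: forall x, cnt x (filt a) = if deq x E then 0 else cnt x a) by (intros; apply cnt_filter).
  assert (cntc: forall x (l : list (H -> Prop)), cnt x (E :: l) = (if deq x E then 1 else 0) + cnt x l).
  { intros x l. unfold cnt; simpl. destruct (deq E x); destruct (deq x E); subst; try congruence; auto. }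
  assert (Dpi: DK (pi X)) by (apply DK_pi; auto).
  destruct (decomp F) as [[IE EW]|[IE EW]]; fold W in EW; rewrite EW in Ea; subst X.
  - assert (Epi: pi (Pm E W) = W).
    { apply piW; intros z. rewrite EY; auto. split; [intros [[Hz| ->] Kz]; auto; exfalso; apply notKu; auto|].
      intros Hz; split; auto. }
    split; [split; auto; intros _; rewrite EY; auto|]. split.
    + apply NNPP; intros C. apply Mn. exists (E :: filt a). split; [|split].
      * split; [constructor; [apply IrrE|auto]|reflexivity].
      * apply sub_cnt. intros x. rewrite cntc, cntf. destruct (deq x E) as [->|]; [|lia].
        apply cnt_In in IE. lia.
      * rewrite sub_cnt. intros C2. specialize (C2 E). rewrite cntc, cntf in C2.
        destruct (deq E E); [lia|congruence].
    + rewrite Epi. apply (Min_tr mul one_l one_r ((@ST H)) SS); [auto|]. split; [split; auto|].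
      intros [c [[Fc' Ec] [Sc Nc]]]. apply Mn. exists (E :: c). split; [|split].
      * split; [constructor; [apply IrrE|auto]|]. change (Pm E (wp c) = Pm E W). rewrite Ec; auto.
      * rewrite sub_cnt in *. intros x. rewrite cntc. specialize (Sc x). rewrite cntf in Sc.
        destruct (deq x E) as [->|]; [|lia]. apply cnt_In in IE. lia.
      * intros Sa. apply Nc. rewrite sub_cnt in *. intros x. rewrite cntf. specialize (Sa x).
        rewrite cntc in Sa. destruct (deq x E); lia.
  - assert (Epi: pi W = W).
    { apply piW; intros z. split; [tauto|intros; split; auto]. }
    split; [split; [intros; contradiction|intros Wu; exfalso; apply notKu; auto]|]. split.
    + rewrite (@cnt_In _ E a) in IE. lia.
    + rewrite Epi. apply (Min_tr mul one_l one_r ((@ST H)) SS); [auto|]. split; [split; auto|].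
      intros [c [Fcc [Sc Nc]]]. apply Mn. exists c. split; [auto|split].
      * rewrite sub_cnt in *. intros x. specialize (Sc x). rewrite cntf in Sc. destruct (deq x E); lia.
      * intros Sa. apply Nc. rewrite sub_cnt in *. intros x. rewrite cntf. specialize (Sa x).
        destruct (deq x E); lia.
Qed.

Lemma btoa_u : UmF DT Pm Po.
Proof.
  apply (UmF_iff mul one one_l one_r ((@ST H)) ST1'). split.
  - intros X DX NX. apply (fact_ex mul assoc one_l one_r DX NX).
  - intros X a b DX Ma Mb.
    destruct (main DX Ma) as [Ia [Ca Ma']]. destruct (main DX Mb) as [Ib [Cb Mb']].
    apply (UmF_iff mul one one_l one_r K K1') in UK. destruct UK as [_ U2].
    destruct (U2 _ _ _ (DK_pi DX) Ma' Mb') as [S1 S2].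
    rewrite sub_cnt in S1, S2.
    assert (Eq: forall x, cnt x a = cnt x b).
    { intros x. destruct (deq x E) as [->|NE].
      - destruct (classic (X u)) as [Xu|Xu].
        + pose proof (proj1 (cnt_In _ _) (proj2 Ia Xu)). pose proof (proj1 (cnt_In _ _) (proj2 Ib Xu)). lia.
        + assert (~ In E a) by tauto. assert (~ In E b) by tauto.
          rewrite (cnt_In E a) in H0. rewrite (cnt_In E b) in H1. lia.
      - specialize (S1 x). specialize (S2 x). unfold filt in S1, S2. rewrite !cnt_filter in S1, S2.
        destruct (deq x E); [congruence|lia]. }
    split; apply sub_cnt; intros x; rewrite Eq; lia.
Qed.

End WithU.

Lemma btoa : UmF DT Pm Po.
Proof.
  destruct (classic (exists u, unit u /\ u <> one)) as [[u [Hu Nu]]|N].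
  - apply (btoa_u Hu Nu).
  - assert (EK: K = (@ST H)).
    { apply seteq; intros z; split; [intros; exact I|intros _].
      destruct (classic (unit z)) as [Uz|Uz]; [right|left; auto].
      apply NNPP; intros C; apply N; exists z; auto. }
    rewrite <- EK. exact UK.
Qed.

End BtoA.

End P5.
Import P5.

Theorem theorem3p6 (H : Type) (mul : H -> H -> H) (one : H)
  (Hmon : is_monoid mul one) :
  Pfin1_UmF mul one (fun _ => True) <->
  (subsemigroup mul (fun x => ~ is_unit mul one x) /\
   almost_breakable mul (fun x => ~ is_unit mul one x) /\
   units_order_le2 mul one /\
   trivial_ideal_extension mul one /\
   Pfin1_UmF mul one (fun x => ~ is_unit mul one x \/ x = one)).
Proof.
  destruct Hmon as [assoc [one_l one_r]]. split.
  - intros U. exact (part_b assoc one_l one_r U).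
  - intros [S1 [S2 [S3 [S4 S5]]]]. exact (btoa assoc one_l one_r S1 S3 S4 S5).
Qed.
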